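(* Fix $\delta>0$. Then $\lim_{l\to\infty}V_l^{\delta}=V^{\delta}$ on $\mathcal G_\delta\times[\underline{\lambda},\infty)$, and $\mathcal T(V^{\delta})(x_n^{\delta},\lambda)=V^{\delta}(x_n^{\delta},\lambda)$ for all $(x_n^\delta,\lambda)\in\mathcal G_\delta\times[\underline{\lambda},\infty)$.
   Context: Model: fix $p>0$, $q>0$, $d>0$, $\beta>0$, $\underline{\lambda}\ge0$ and distribution functions $F_U,F_Y$ of strictly positive random variables with finite expectation. For initial intensity $\lambda\ge\underline{\lambda}$, $\lambda_t=\underline{\lambda}+e^{-dt}(\lambda-\underline{\lambda})+\sum_{k=1}^{\widetilde N_t}Y_ke^{-d(t-T_k)}$ with $\widetilde N$ a rate-$\beta$ Poisson process (arrival times $T_k$) and $Y_k$ i.i.d. $\sim F_Y$ independent of $\widetilde N$; conditionally on $(\lambda_s)$, claims arrive as an inhomogeneous Poisson process $N_t$ with intensity $\lambda_t$, with i.i.d. sizes $U_j\sim F_U$ independent of everything else; surplus $X_t=x+pt-\sum_{j\le N_t}U_j$. The premium satisfies $p=(1+\eta)\mathbb E(U_1)\lambda_{\mathrm{av}}$, $\eta>0$, $\lambda_{\mathrm{av}}=\lim_t\mathbb E(\int_0^t\lambda_sds)/t$. Extended strategies: a pair $(L,\tau^F)$ with $L$ a dividend process (non-decreasing, càdlàg, adapted, $L_t\le X_t$ before ruin) and $\tau^F$ a stopping time at which all current surplus is paid and the business is closed; value $J((L,\tau^F);x,\lambda)=\mathbb E\big(\int_{0^-}^{\tau^L\wedge\tau^F}e^{-qt}dL_t+1_{\{\tau^F<\tau^L\}}e^{-q\tau^F}(X_{\tau^F}-L_{\tau^F})\big)$,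 $\tau^L=\inf\{t:X_t-L_{t^-}<0\}$. Discretization: for $\delta>0$, $\mathcal G_\delta=\{x_n^\delta=np\delta:n\ge0\}$, $\rho^\delta(x)=\max\{x_n^\delta\le x\}$. At state $(x_n^\delta,\lambda)$ let $\tau,U$ be the time until and size of the next claim, $T,Y$ the time until and size of the next intensity jump, $\lambda^c_t=\underline{\lambda}+e^{-dt}(\lambda-\underline{\lambda})$. Control actions: $\mathbf E_0$: pay nothing until $\delta\wedge\tau\wedge T$; if $\delta<\tau\wedge T$ new state $(x_{n+1}^\delta,\lambda^c_\delta)$; if $\tau\le\delta\wedge T$ and $y=x_n^\delta+p\tau-U<0$, ruin; if $y\ge0$ pay $y-\rho^\delta(y)$ and new state $(\rho^\delta(y),\lambda^c_\tau)$; if $T<\delta\wedge\tau$ pay $pT$ and new state $(x_n^\delta,\lambda^c_T+Y)$. $\mathbf E_1$ (only if $n\ge1$): pay $p\delta$, new state $(x_{n-1}^\delta,\lambda)$. $\mathbf E_F$: pay $x_n^\delta$ and close. $\widetilde\Pi^\delta_{x_n^\delta,\lambda}$: extended strategies obtained by finite or infinite sequences of these actions; $\widetilde\Pi^{\delta,l}_{x_n^\delta,\lambda}$: those obtained by a sequence of exactly $l$ control actions. $V^\delta(x_n^\delta,\lambda)=\sup_{\widetilde\Pi^\delta_{x_n^\delta,\lambda}}J$ and $V^\delta_l(x_n^\delta,\lambda)=\sup_{\widetilde\Pi^{\delta,l}_{x_n^\delta,\lambda}}J$. Operators on nonnegative Lebesgue measurable $w:\mathcal G_\delta\times[\underline{\lambda},\infty)\to[0,\infty)$: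 with $y=x_n^\delta+p\tau-U$, $\mathcal T_0(w)(x_n^\delta,\lambda)=\mathbb P(\delta\wedge T\wedge\tau=\delta)e^{-q\delta}w(x_{n+1}^\delta,\lambda^c_\delta)+\mathbb E\big(1_{\{\delta\wedge T\wedge\tau=\tau,\ y\ge0\}}e^{-q\tau}[w(\rho^\delta(y),\lambda^c_\tau)+y-\rho^\delta(y)]\big)+\mathbb E\big(1_{\{\delta\wedge T\wedge\tau=T\}}e^{-qT}[w(x_n^\delta,\lambda^c_T+Y)+pT]\big)$; $\mathcal T_1(w)(x_n^\delta,\lambda)=w(x_{n-1}^\delta,\lambda)+\delta p$ (for $n\ge1$); $\mathcal T_F(w)(x_n^\delta,\lambda)=x_n^\delta$; $\mathcal T=\max\{\mathcal T_0,\mathcal T_1,\mathcal T_F\}$ (with $\mathcal T_1$ omitted when $n=0$). *)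

(* Defs.v *)
From mathcomp Require Import all_boot all_order all_algebra.
From mathcomp Require Import all_classical all_reals all_analysis.

Set Implicit Arguments.
Unset Strict Implicit.
Unset Printing Implicit Defensive.

Import Order.TTheory GRing.Theory Num.Theory.
Local Open Scope classical_set_scope.
Local Open Scope ring_scope.

Record model (R : realType) := Model {
  prem : R;
  disc : R;
  decay : R;
  beta : R;                 (* rate of the intensity-jump Poisson process *)
  lamb : R;
  FU : probability R R;     (* law of the claim sizes U_j *)
  FY : probability R R      (* law of the intensity jumps Y_k *)
}.

Inductive action := E0 | E1 | EF.


Definition xg (R : realType) (M : model R) (delta : R) (n : nat) : R :=
  n%:R * prem M * delta.

(* index of rho^delta(y) for y >= 0: rho^delta(y) = xg (gidx y) *)
Definition gidx (R : realType) (M : model R) (delta : R) (y : R) : nat :=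
  Num.truncn (y / (prem M * delta)).

Definition lamc (R : realType) (M : model R) (lam t : R) : R :=
  lamb M + expR (- (decay M * t)) * (lam - lamb M).

(* integrated intensity  int_0^t lambda^c_s ds  (closed form) *)
Definition Lam (R : realType) (M : model R) (lam t : R) : R :=
  lamb M * t + (lam - lamb M) * (1 - expR (- (decay M * t))) / decay M.

Local Open Scope ereal_scope.

(* The continuation g n' lam' s
   is the (discounted-from-time-s) value in the new state (x_{n'}, lam'),
   s being the duration of the step.  The joint law of (tau, U, T, Y):
   T ~ Exp(beta), U ~ F_U, Y ~ F_Y independent, and on [0, T) the first claim
   time tau has survival function exp(-Lam lam t) (inhomogeneous Poisson
   process with intensity lambda^c_t).
   - {delta < tau /\ T}: probability exp(-Lam lam delta - beta delta);
   - {tau <= delta /\ T}: density beta-survival * lambda^c_s * exp(-Lam lam s);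
   - {T < delta /\ tau}: density beta e^{-beta s} * exp(-Lam lam s). *)
Definition T0gen (R : realType) (M : model R) (delta : R)
    (g : nat -> R -> R -> \bar R) (n : nat) (lam : R) : \bar R :=
  (expR (- (Lam M lam delta + beta M * delta)) * expR (- (disc M * delta)))%:E
      * g n.+1 (lamc M lam delta) delta
  + \int[lebesgue_measure]_(s in `]0%R, delta])
      ((expR (- (beta M * s)) * lamc M lam s * expR (- Lam M lam s)
          * expR (- (disc M * s)))%:E
       * \int[FU M]_u
           (let y := (xg M delta n + prem M * s - u)%R in
            if (0 <= y)%R then
              g (gidx M delta y) (lamc M lam s) s
              + (y - xg M delta (gidx M delta y))%:E
            else 0))
  + \int[lebesgue_measure]_(s in `]0%R, delta])
      ((beta M * expR (- (beta M * s)) * expR (- Lam M lam s)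
          * expR (- (disc M * s)))%:E
       * \int[FY M]_y (g n (lamc M lam s + y)%R s + (prem M * s)%:E)).

Definition Top0 (R : realType) (M : model R) (delta : R)
    (w : nat -> R -> \bar R) (n : nat) (lam : R) : \bar R :=
  T0gen M delta (fun n' lam' _ => w n' lam') n lam.

Definition Top1 (R : realType) (M : model R) (delta : R)
    (w : nat -> R -> \bar R) (n : nat) (lam : R) : \bar R :=
  w n.-1 lam + (delta * prem M)%:E.

Definition TopF (R : realType) (M : model R) (delta : R)
    (w : nat -> R -> \bar R) (n : nat) (lam : R) : \bar R :=
  (xg M delta n)%:E.

Definition Top (R : realType) (M : model R) (delta : R)
    (w : nat -> R -> \bar R) (n : nat) (lam : R) : \bar R :=
  match n with
  | 0%N => maxe (Top0 M delta w n lam) (TopF M delta w n lam)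
  | _.+1 => maxe (Top0 M delta w n lam)
                 (maxe (Top1 M delta w n lam) (TopF M delta w n lam))
  end.

(* Observations: (grid index n, intensity lambda, elapsed time).
   A history lists the observations so far, the current one first.
   A (history-dependent) choice of control actions is a policy. *)
Definition obs (R : realType) := (nat * R * R)%type.
Definition policy (R : realType) := seq (obs R) -> action.

Definition cur (R : realType) (M : model R) (h : seq (obs R)) : obs R :=
  head (0%N, lamb M, 0%R) h.

Definition admissible (R : realType) (M : model R) (pi : policy R) : Prop :=
  forall h, (cur M h).1.1 = 0%N -> pi h <> E1.

(* Expected discounted dividends of the first k control actions of pi,
   started from history h, plus a terminal reward term(n, lam) if the
   business is still open (not ruined, not closed) after k actions. *)
Fixpoint Jval (R : realType) (M : model R) (delta : R)
    (term : nat -> R -> \bar R) (k : nat) (pi : policy R) (h : seq (obs R))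
    : \bar R :=
  let: (n, lam, t) := cur M h in
  match k with
  | 0%N => term n lam
  | k'.+1 =>
    match pi h with
    | EF => (xg M delta n)%:E
    | E1 => Jval M delta term k' pi ((n.-1, lam, t) :: h) + (delta * prem M)%:E
    | E0 => T0gen M delta
              (fun n' lam' s => Jval M delta term k' pi ((n', lam', t + s)%R :: h))
              n lam
    end
  end.

(* V^delta_l : strategies made of exactly l control actions; if the business
   is still running after the l-th action, the remaining surplus is paid and
   the business closed (terminal reward x_n^delta). *)
Definition Vl (R : realType) (M : model R) (delta : R) (l : nat)
    (n : nat) (lam : R) : \bar R :=
  ereal_sup [set Jval M delta (fun n' _ => (xg M delta n')%:E) l pi
                   [:: (n, lam, 0%R)] | pi in admissible M].

(* V^delta : all (finite or infinite) sequences of control actions; the value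
   of a strategy is the limit (= supremum, payments being nonnegative) of the
   expected discounted dividends paid during its first k control actions. *)
Definition Vd (R : realType) (M : model R) (delta : R)
    (n : nat) (lam : R) : \bar R :=
  ereal_sup [set v | exists k pi, admissible M pi /\
                     v = Jval M delta (fun _ _ => 0) k pi [:: (n, lam, 0%R)]].

(* lambda_av = lim_t E(int_0^t lambda_s ds)/t = lamb + beta E(Y)/d *)
Definition lambda_av (R : realType) (M : model R) : \bar R :=
  (lamb M)%:E + (beta M / decay M)%:E * \int[FY M]_y y%:E.

(* Main.v *)
Require Import Defs.
From mathcomp Require Import all_boot all_order all_algebra.
From mathcomp Require Import all_classical all_reals all_analysis.
From mathcomp Require Import measurable_realfun.
Set Implicit Arguments.
Unset Strict Implicit.
Unset Printing Implicit Defensive.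
Import Order.TTheory GRing.Theory Num.Theory.
Local Open Scope classical_set_scope.
Local Open Scope ring_scope.


Import HBNNSimple.

Section GenInt.
Local Open Scope ereal_scope.
Context d (T : measurableType d) (R : realType).

Definition NNI (mu : set T -> \bar R) (f : T -> \bar R) :=
  ereal_sup [set sintegral mu h |
  h in [set h : {nnsfun T >-> R} | forall x, (h x)%:E <= f x]].

Lemma integral_NNI (mu : set T -> \bar R) D f :
  \int[mu]_(x in D) f x = NNI mu ((f \_ D)^\+) - NNI mu ((f \_ D)^\-).
Proof. by []. Qed.

Lemma NNI_le mu f g : (forall x, f x <= g x) -> NNI mu f <= NNI mu g.
Proof.
move=> fg; apply: ereal_sup_le => _ [h hf <-]; exists h => //= x.
exact: le_trans (hf x) (fg x).
Qed.

Lemma le_integral_gen (mu : set T -> \bar R) D f g :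
  (forall x, D x -> f x <= g x) ->
  \int[mu]_(x in D) f x <= \int[mu]_(x in D) g x.
Proof.
move=> fg; rewrite !integral_NNI; apply: leeB.
- apply: NNI_le => x; rewrite !funeposE !patchE; case: ifPn => [/set_mem Dx|_].
    by apply: le_max2 => //; exact: fg.
  by [].
- apply: NNI_le => x; rewrite !funenegE !patchE; case: ifPn => [/set_mem Dx|_].
    by apply: le_max2 => //; rewrite leeN2; exact: fg.
  by [].
Qed.

Lemma NNI_null (mu : {measure set T -> \bar R}) N f g :
  measurable N -> mu N = 0 -> (forall x, 0 <= g x) ->
  (forall x, ~ N x -> f x = g x) -> NNI mu f <= NNI mu g.
Proof.
move=> mN N0 g0 fg; apply: ge_ereal_sup => _ [h hf <-].
have mCN : measurable (~` N) by exact: measurableC.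
pose h' := mul_nnsfun h (indic_nnsfun R mCN).
have -> : sintegral mu h = sintegral mu h'.
  rewrite -!integralT_nnsfun; apply: ae_eq_integral => //.
  - by apply/measurable_realfun.measurable_EFinP; exact: measurable_funTS.
  - by apply/measurable_realfun.measurable_EFinP; exact: measurable_funTS.
  - exists N; split => // x /= hx; apply: contra_notP hx => Nx _.
    by rewrite /h' /= mindicE mem_set //= mulr1.
apply: ereal_sup_ubound; exists h' => // x.
rewrite /h' /= mindicE; have [Nx|Nx] := pselect (N x).
  by rewrite memNset ?mulr0//= => /(_ Nx).
by rewrite mem_set //= mulr1 -fg.
Qed.

Lemma integral_null (mu : {measure set T -> \bar R}) N f g :
  measurable N -> mu N = 0 ->
  (forall x, ~ N x -> f x = g x) -> \int[mu]_x f x = \int[mu]_x g x.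
Proof.
move=> mN N0 fg; rewrite !integral_NNI; congr (_ - _); apply/eqP; rewrite eq_le;
  apply/andP; split; apply: (NNI_null mN N0) => // x; rewrite ?patchT ?in_setT //;
  try exact: funepos_ge0; try exact: funeneg_ge0;
  move=> Nx; rewrite ?funeposE ?funenegE !patchE !ifT ?in_setT ?fg //.
Qed.

End GenInt.


Section Policies.
Context (R : realType) (M : model R) (delta : R).

Lemma Jval_sim (term : nat -> R -> \bar R) (pi1 pi2 : policy R)
  (Rel : seq (obs R) -> seq (obs R) -> Prop) :
 (forall H1 H2, Rel H1 H2 ->
   [/\ (cur M H1).1 = (cur M H2).1, pi1 H1 = pi2 H2,
   (forall n' lam' s, Rel ((n', lam', (cur M H1).2 + s) :: H1)
                          ((n', lam', (cur M H2).2 + s) :: H2)) &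
   (forall n', Rel ((n', (cur M H1).1.2, (cur M H1).2) :: H1)
                   ((n', (cur M H2).1.2, (cur M H2).2) :: H2))]) ->
 forall k H1 H2, Rel H1 H2 ->
   Jval M delta term k pi1 H1 = Jval M delta term k pi2 H2.
Proof.
move=> hR; elim=> [|k IH] H1 H2 r12 /=; have [e1 epi hs h1] := hR _ _ r12;
  move: e1 hs h1; case: (cur M H1) => [[n1 l1] t1];
  case: (cur M H2) => [[n2 l2] t2] /= [<- <-] hs h1 //.
rewrite epi; case: (pi2 H2).
- congr (T0gen _ _ _ _ _); apply: funext => n';
  apply: funext => lam'; apply: funext => s.
  exact: IH.
- by rewrite (IH _ _ (h1 n1.-1)).
- by [].
Qed.

Definition shiftt (t : R) (o : obs R) : obs R := (o.1, o.2 + t).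

Lemma cur_map_cat (f : obs R -> obs R) H x0 : H <> [::] ->
  cur M (map f H ++ x0) = f (cur M H).
Proof. by case: H. Qed.

Lemma cur_map (f : obs R -> obs R) H : H <> [::] ->
  cur M (map f H) = f (cur M H).
Proof. by case: H. Qed.

Definition restart (pi : policy R) (s : R) (x0 : obs R) : policy R :=
  fun h => if h is [::] then E0 else pi (map (shiftt s) h ++ [:: x0]).

Lemma restart_adm pi s x0 : admissible M pi -> admissible M (restart pi s x0).
Proof.
move=> ad [|o h] //= h0; apply: ad; by rewrite /cur /=.
Qed.

Lemma Jval_restart term k pi n' lam' s x0 :
  Jval M delta term k pi [:: (n', lam', s); x0] =
  Jval M delta term k (restart pi s x0) [:: (n', lam', 0)].
Proof.
apply: (@Jval_sim _ _ _ (fun H1 H2 => H2 <> [::] /\ H1 = map (shiftt s) H2 ++ [:: x0])); last first.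
  by split => //=; rewrite /shiftt /= add0r.
move=> H1 H2 [H2n ->]; rewrite cur_map_cat //; split => //.
- by case: H2 H2n.
- move=> n'' l'' s''; split => //=; congr (_ :: _); rewrite /shiftt /=.
  by congr (_, _); rewrite addrAC.
Qed.

Definition glue (first : seq (obs R) -> action) (P : obs R -> policy R) : policy R :=
  fun h => if (size h <= 1)%N then first h else
    let a := nth (0%N, lamb M, 0) h (size h - 2) in
    P a (map (shiftt (- a.2)) (take (size h - 1) h)).

Lemma glue_adm first P : (forall h, (cur M h).1.1 = 0%N -> (size h <= 1)%N -> first h <> E1) ->
  (forall a, admissible M (P a)) -> admissible M (glue first P).
Proof.
move=> hf hP h h0; rewrite /glue; case: ifPn => [hs|hs]; first exact: hf.
apply: hP; case: h h0 hs => [|o h] //= h0 hs.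
by rewrite subn1 /=; case: (size h) hs => // k _ /=; rewrite take_cons.
Qed.

Lemma Jval_glue term k first P a x0 :
  Jval M delta term k (glue first P) [:: a; x0] =
  Jval M delta term k (P a) [:: (a.1, 0)].
Proof.
apply: (@Jval_sim _ _ _ (fun H1 H2 => exists H', H1 = rcons H' a ++ [:: x0] /\
    H2 = map (shiftt (- a.2)) (rcons H' a))); last first.
  by exists [::]; split => //=; rewrite /shiftt subrr.
move=> H1 H2 [H' [-> ->]].
have ne : rcons H' a <> [::] by case: H'.
have cc : cur M (rcons H' a ++ [:: x0]) = cur M (rcons H' a) by case: (rcons H' a) ne.
rewrite cur_map // cc; split => //.
- rewrite /glue size_cat size_rcons /= addn1 ltnS leqn0 /=.
  have -> : ((size H').+2 - 2 = size H')%N by rewrite subn2.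
  rewrite nth_cat size_rcons ltnSn nth_rcons ltnn eqxx.
  have -> : ((size H').+2 - 1 = (size H').+1)%N by rewrite subn1.
  by rewrite take_cat size_rcons ltnn subnn take0 cats0.
- move=> n'' l'' s''; exists ((n'', l'', (cur M (rcons H' a)).2 + s'') :: H').
  split => //=; congr (_ :: _); rewrite /shiftt /=.
  by congr (_, _); rewrite addrAC.
- move=> n''; exists ((n'', (cur M (rcons H' a)).1.2, (cur M (rcons H' a)).2) :: H').
  by split.
Qed.

Definition trunc (l : nat) (pi : policy R) : policy R :=
  fun h => if (l < size h)%N then EF else pi h.

Lemma trunc_adm l pi : admissible M pi -> admissible M (trunc l pi).
Proof. by move=> ad h h0; rewrite /trunc; case: ifP => // _; exact: ad. Qed.

Lemma JvalS term k pi h : Jval M delta term k.+1 pi h =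
  let: (n, lam, t) := cur M h in
  match pi h with
    | EF => (xg M delta n)%:E
    | E1 => Jval M delta term k pi ((n.-1, lam, t) :: h) + (delta * prem M)%:E
    | E0 => T0gen M delta
              (fun n' lam' s => Jval M delta term k pi ((n', lam', t + s)%R :: h))
              n lam
    end%E.
Proof. by []. Qed.

Lemma Jval_trunc l pi : forall m H, (size H + m = l.+1)%N ->
  Jval M delta (fun _ _ => 0%E) m.+1 (trunc l pi) H =
  Jval M delta (fun n' _ => (xg M delta n')%:E) m pi H.
Proof.
elim=> [|m IH] H hs.
  rewrite JvalS /=; case: (cur M H) => [[n lam] t].
  by rewrite /trunc addn0 in hs *; rewrite hs ltnSn.
rewrite JvalS JvalS; case: (cur M H) => [[n lam] t].
have -> : trunc l pi H = pi H.
  rewrite /trunc ifF //; apply/negbTE; rewrite -leqNgt -ltnS -hs addnS ltnS leq_addr //.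
case: (pi H) => //.
- congr (T0gen _ _ _ _ _); apply: funext => n';
  apply: funext => lam'; apply: funext => s.
  by apply: IH; rewrite /= addSnnS.
- by rewrite IH //= addSnnS.
Qed.

End Policies.


Section MeasGen.
Context d (T : measurableType d) (R : realType).

Lemma measurable_natdep (N : T -> nat) (W : nat -> T -> \bar R) :
  (forall m, measurable (N @^-1` [set m])) ->
  (forall m, measurable_fun setT (W m)) ->
  measurable_fun setT (fun z => W (N z) z).
Proof.
move=> mN mW _ B mB; rewrite setTI.
have -> : (fun z => W (N z) z) @^-1` B = \bigcup_m (N @^-1` [set m] `&` W m @^-1` B).
  apply/seteqP; split => [z /= Bz|z [m _ [/= <- Bz]]] //.
  by exists (N z).
apply: bigcupT_measurable => m; apply: measurableI => //.
by rewrite -[X in measurable X]setTI; exact: mW.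
Qed.

Lemma measurable_truncn_pre (Y : T -> R) (m : nat) : measurable_fun setT Y ->
  measurable ((fun z => Num.truncn (Y z)) @^-1` [set m]).
Proof.
move=> mY.
have mlt : forall a : R, measurable [set z | Y z < a].
  move=> a; rewrite -[X in measurable X]setTI.
  have -> : [set z | Y z < a] = Y @^-1` `]-oo, a[ by apply/seteqP; split => z /=; rewrite in_itv.
  exact: mY.
have mge : forall a : R, measurable [set z | a <= Y z].
  move=> a; rewrite -[X in measurable X]setTI.
  have -> : [set z | a <= Y z] = Y @^-1` `[a, +oo[ by apply/seteqP; split => z /=; rewrite in_itv /= andbT.
  exact: mY.
case: m => [|k].
  have -> : (fun z => Num.truncn (Y z)) @^-1` [set 0%N] = [set z | Y z < 1%:R].
    by apply/seteqP; split => z /=; rewrite -real_truncn_le_nat ?num_real // leqn0 => /eqP.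
  exact: mlt.
have -> : (fun z => Num.truncn (Y z)) @^-1` [set k.+1] = [set z | Y z < k.+2%:R] `&` [set z | k.+1%:R <= Y z].
  apply/seteqP; split => z /=.
    move=> e; rewrite -real_truncn_le_nat ?num_real // -truncn_gt_nat e; split => //.
  move=> [h1 h2]; apply/eqP; rewrite eqn_leq real_truncn_le_nat ?num_real // h1 /=.
  by rewrite truncn_gt_nat.
exact: measurableI.
Qed.

End MeasGen.

Section Model.
Context (R : realType) (M : model R) (delta : R).
Local Notation p := (prem M).

Definition c0 lam := expR (- (Lam M lam delta + beta M * delta)) * expR (- (disc M * delta)).
Definition c1 lam s := expR (- (beta M * s)) * lamc M lam s * expR (- Lam M lam s)
          * expR (- (disc M * s)).
Definition c2 lam s := beta M * expR (- (beta M * s)) * expR (- Lam M lam s)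
          * expR (- (disc M * s)).
Definition PhiUg (g : nat -> R -> R -> \bar R) n lam s u : \bar R :=
  let y := (xg M delta n + p * s - u)%R in
  if (0 <= y)%R then g (gidx M delta y) (lamc M lam s) s + (y - xg M delta (gidx M delta y))%:E
  else 0%E.
Definition PhiYg (g : nat -> R -> R -> \bar R) n lam s y : \bar R :=
  (g n (lamc M lam s + y)%R s + (p * s)%:E)%E.
Definition PhiU (w : nat -> R -> \bar R) := PhiUg (fun n' l _ => w n' l).
Definition PhiY (w : nat -> R -> \bar R) := PhiYg (fun n' l _ => w n' l).

Lemma T0genE g n lam : T0gen M delta g n lam =
  ((c0 lam)%:E * g n.+1 (lamc M lam delta) delta
  + \int[lebesgue_measure]_(s in `]0%R, delta]) ((c1 lam s)%:E * \int[FU M]_u PhiUg g n lam s u)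
  + \int[lebesgue_measure]_(s in `]0%R, delta]) ((c2 lam s)%:E * \int[FY M]_y PhiYg g n lam s y))%E.
Proof. by []. Qed.

Lemma Top0E w n lam : Top0 M delta w n lam =
  ((c0 lam)%:E * w n.+1 (lamc M lam delta)
  + \int[lebesgue_measure]_(s in `]0%R, delta]) ((c1 lam s)%:E * \int[FU M]_u PhiU w n lam s u)
  + \int[lebesgue_measure]_(s in `]0%R, delta]) ((c2 lam s)%:E * \int[FY M]_y PhiY w n lam s y))%E.
Proof. by []. Qed.

Hypothesis hlamb : 0 <= lamb M.
Hypothesis hbeta : 0 <= beta M.
Hypothesis hFY : FY M [set x : R | x <= 0] = 0%E.

Lemma lamc_ge lam s : lamb M <= lam -> lamb M <= lamc M lam s.
Proof. by move=> h; rewrite /lamc lerDl mulr_ge0 // ?expR_ge0 // subr_ge0. Qed.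

Lemma lamc_ge0 lam s : lamb M <= lam -> 0 <= lamc M lam s.
Proof. by move=> h; apply: le_trans hlamb (lamc_ge _ h). Qed.

Lemma c0_ge0 lam : 0 <= c0 lam.
Proof. by rewrite /c0 mulr_ge0 ?expR_ge0. Qed.

Lemma c1_ge0 lam s : lamb M <= lam -> 0 <= c1 lam s.
Proof. by move=> h; rewrite /c1 !mulr_ge0 ?expR_ge0 ?lamc_ge0. Qed.

Lemma c2_ge0 lam s : 0 <= c2 lam s.
Proof. by rewrite /c2 !mulr_ge0 ?expR_ge0. Qed.

Lemma mle0 : measurable [set x : R | x <= 0].
Proof.
have -> : [set x : R | x <= 0] = [set` `]-oo, 0%R]] by apply/seteqP; split => x /=; rewrite in_itv.
exact: measurable_itv.
Qed.

Lemma T0gen_le g1 g2 n lam : lamb M <= lam ->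
  (forall n' lam' s, lamb M <= lam' -> (g1 n' lam' s <= g2 n' lam' s)%E) ->
  (T0gen M delta g1 n lam <= T0gen M delta g2 n lam)%E.
Proof.
move=> hl hg; rewrite !T0genE; apply: leeD; first apply: leeD.
- by apply: lee_wpmul2l; [rewrite lee_fin c0_ge0|apply: hg; exact: lamc_ge].
- apply: le_integral_gen => s _; apply: lee_wpmul2l; first by rewrite lee_fin c1_ge0.
  apply: le_integral_gen => u _; rewrite /PhiUg /=; case: ifP => // _.
  by apply: leeD => //; apply: hg; exact: lamc_ge.
- apply: le_integral_gen => s _; apply: lee_wpmul2l; first by rewrite lee_fin c2_ge0.
  rewrite (integral_null mle0 hFY (f := PhiYg g1 n lam s) (g := fun y : R => if (y <= 0)%R then 0%E else PhiYg g1 n lam s y)); last first.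
    by move=> y /= /negP/negbTE ->.
  rewrite (integral_null mle0 hFY (f := PhiYg g2 n lam s) (g := fun y : R => if (y <= 0)%R then 0%E else PhiYg g2 n lam s y)); last first.
    by move=> y /= /negP/negbTE ->.
  apply: le_integral_gen => y _; case: ifPn => // /negP/negP; rewrite -ltNge => y0.
  rewrite /PhiYg; apply: leeD => //; apply: hg.
  by apply: le_trans (lamc_ge s hl) _; rewrite lerDl ltW.
Qed.

End Model.


Ltac mt := repeat first [ exact: measurable_cst | exact: measurable_fst | exact: measurable_snd
  | exact: measurable_id
  | apply: measurable_funD | apply: measurable_funM | apply: measurable_funB
  | apply: measurable_funN
  | apply: measurable_maxr
  | apply: measurableT_comp; [exact: measurable_expR|]
  | apply: measurableT_comp; [exact: measurable_snd|]
  | apply: measurableT_comp; [exact: measurable_fst|] ].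

Lemma mTS d1 d2 (T1 : measurableType d1) (T2 : measurableType d2) (D : set T1) (f : T1 -> T2) :
  measurable_fun setT f -> measurable_fun D f.
Proof. by move=> h; apply: (measurable_funS measurableT (@subsetT _ D)). Qed.

Section Meas.
Context (R : realType) (M : model R) (delta : R).

Lemma lamc_meas : measurable_fun setT (fun z : R * R => lamc M z.1 z.2).
Proof. rewrite /lamc; mt. Qed.

Lemma Lam_meas : measurable_fun setT (fun z : R * R => Lam M z.1 z.2).
Proof. rewrite /Lam; mt. Qed.

Lemma c0_meas : measurable_fun setT (c0 M delta).
Proof. rewrite /c0 /Lam; mt. Qed.

Lemma c1_meas : measurable_fun setT (fun z : R * R => c1 M z.1 z.2).
Proof. rewrite /c1 /lamc /Lam; mt. Qed.

Lemma c2_meas : measurable_fun setT (fun z : R * R => c2 M z.1 z.2).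
Proof. rewrite /c2 /Lam; mt. Qed.

Lemma PhiU_meas w n : (forall m, measurable_fun setT (w m)) ->
  measurable_fun setT (fun z : (R * R) * R => PhiU M delta w n z.1.1 z.1.2 z.2).
Proof.
move=> hw.
pose Y (z : (R * R) * R) := xg M delta n + prem M * z.1.2 - z.2.
have mY : measurable_fun setT Y by rewrite /Y; mt.
pose W m z := if 0 <= Y z then (w m (lamc M z.1.1 z.1.2) + (Y z - xg M delta m)%:E)%E else 0%E.
have -> : (fun z : (R * R) * R => PhiU M delta w n z.1.1 z.1.2 z.2) =
   fun z => W (gidx M delta (Y z)) z by [].
apply: measurable_natdep.
  move=> m; rewrite /gidx; apply: measurable_truncn_pre; mt.
move=> m; apply: measurable_fun_if => //.
- exact: measurable_fun_ler.
- apply: measurable_funS (_ : measurable_fun setT _) => //.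
  apply: emeasurable_funD.
    apply: measurableT_comp; first exact: hw.
    exact: measurableT_comp lamc_meas measurable_fst.
  by apply/measurable_EFinP; mt.
Qed.

Lemma PhiY_meas w n : (forall m, measurable_fun setT (w m)) ->
  measurable_fun setT (fun z : (R * R) * R => PhiY M w n z.1.1 z.1.2 z.2).
Proof.
move=> hw; rewrite /PhiY /PhiYg /=; apply: emeasurable_funD.
  apply: measurableT_comp; first exact: hw.
  apply: measurable_funD => //; last by mt.
by apply/measurable_EFinP; mt.
Qed.

End Meas.

Section Meas2.
Context (R : realType) (M : model R) (delta : R).
Hypothesis hp : 0 < prem M.
Hypothesis hdel : 0 < delta.
Hypothesis hlamb : 0 <= lamb M.
Hypothesis hbeta : 0 <= beta M.
Local Open Scope ereal_scope.

Lemma xg_gidx y : (0 <= y)%R -> (xg M delta (gidx M delta y) <= y)%R.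
Proof.
move=> y0; rewrite /xg /gidx -mulrA -ler_pdivlMr ?mulr_gt0 //.
by rewrite truncn_le divr_ge0 // ?mulr_ge0 // ltW.
Qed.

Lemma PhiU_ge0 w n lam s u : (forall m x, 0 <= w m x) -> 0 <= PhiU M delta w n lam s u.
Proof.
move=> w0; rewrite /PhiU /PhiUg /=; case: ifPn => // y0.
by rewrite adde_ge0 // lee_fin subr_ge0 xg_gidx.
Qed.

Lemma PhiY_ge0 w n lam s y : (forall m x, 0 <= w m x) -> (0 <= s)%R -> 0 <= PhiY M w n lam s y.
Proof. by move=> w0 s0; rewrite /PhiY /PhiYg adde_ge0 // lee_fin mulr_ge0 // ltW. Qed.

Definition GU w n (z : R * R) := \int[FU M]_u PhiU M delta w n z.1 z.2 u.
Definition GY w n (z : R * R) := \int[FY M]_y PhiY M w n z.1 z.2 y.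

Lemma GU_meas w n : (forall m, measurable_fun setT (w m)) -> (forall m x, 0 <= w m x) ->
  measurable_fun setT (GU w n).
Proof.
move=> hw w0.
have := @measurable_fun_fubini_tonelli_F _ _ _ _ _ (FU M)
  (fun z : (R * R) * R => PhiU M delta w n z.1.1 z.1.2 z.2) (@PhiU_meas R M delta w n hw).
by apply => z; exact: PhiU_ge0.
Qed.

(* for GY we need s >= 0; we use a clamped version *)
Definition GYc w n (z : R * R) := \int[FY M]_y PhiY M w n z.1 (Num.max z.2 0%R) y.

Lemma GYc_meas w n : (forall m, measurable_fun setT (w m)) -> (forall m x, 0 <= w m x) ->
  measurable_fun setT (GYc w n).
Proof.
move=> hw w0.
have mP := @PhiY_meas R M w n hw.
have := @measurable_fun_fubini_tonelli_F _ _ _ _ _ (FY M)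
  (fun z : (R * R) * R => PhiY M w n z.1.1 (Num.max z.1.2 0%R) z.2).
apply.
  rewrite /PhiY /PhiYg /=; apply: emeasurable_funD.
    apply: measurableT_comp; first exact: hw.
    by rewrite /lamc; mt.
  by apply/measurable_EFinP; mt.
by move=> z; apply: PhiY_ge0 => //; rewrite le_max lexx orbT.
Qed.

Definition Dd : set R := [set` `]0%R, delta]].
Lemma mDd : measurable Dd. Proof. exact: measurable_itv. Qed.

Lemma F1_meas w n : (forall m, measurable_fun setT (w m)) -> (forall m x, 0 <= w m x) ->
  measurable_fun [set lam | lamb M <= lam]%R (fun lam =>
   \int[lebesgue_measure]_(s in `]0%R, delta]) ((c1 M lam s)%:E * \int[FU M]_u PhiU M delta w n lam s u)).
Proof.
move=> hw w0.
pose H (z : R * R) := ((Num.max (c1 M z.1 z.2) 0%R * \1_Dd z.2)%R%:E * GU w n z).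
have mH : measurable_fun setT H.
  apply: emeasurable_funM; last exact: GU_meas.
  apply/measurable_EFinP; apply: measurable_funM.
    by apply: measurable_maxr => //; exact: c1_meas.
  by apply: measurableT_comp; [apply: measurable_indic; exact: mDd | exact: measurable_snd].
have H0 : forall z, 0 <= H z.
  move=> z; apply: mule_ge0; first by rewrite lee_fin mulr_ge0 // ?le_max ?lexx ?orbT // indicE.
  by apply: integral_ge0 => u _; exact: PhiU_ge0.
have := @measurable_fun_fubini_tonelli_F _ _ _ _ _ (@lebesgue_measure R) H mH H0.
move=> /(measurable_funS _ (@subsetT _ [set lam | lamb M <= lam]%R)) => /(_ measurableT) mF.
apply: eq_measurable_fun mF => lam; rewrite inE /= => hl.
rewrite /fubini_F [RHS]integral_mkcond; apply: eq_integral => s _; rewrite !patchE /H /= indicE /Dd.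
case: ifPn => sD.
  have -> : Num.max (c1 M lam s) 0%R = c1 M lam s by apply/max_idPl; exact: c1_ge0.
  by rewrite mulr1.
by rewrite mulr0 mul0e.
Qed.
Lemma F2_meas w n : (forall m, measurable_fun setT (w m)) -> (forall m x, 0 <= w m x) ->
  measurable_fun [set lam | lamb M <= lam]%R (fun lam =>
   \int[lebesgue_measure]_(s in `]0%R, delta]) ((c2 M lam s)%:E * \int[FY M]_y PhiY M w n lam s y)).
Proof.
move=> hw w0.
pose H (z : R * R) := ((c2 M z.1 z.2 * \1_Dd z.2)%R%:E * GYc w n z).
have mH : measurable_fun setT H.
  apply: emeasurable_funM; last exact: GYc_meas.
  apply/measurable_EFinP; apply: measurable_funM; first exact: c2_meas.
  by apply: measurableT_comp; [apply: measurable_indic; exact: mDd | exact: measurable_snd].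
have H0 : forall z, 0 <= H z.
  move=> z; apply: mule_ge0; first by rewrite lee_fin mulr_ge0 // ?c2_ge0 // indicE.
  by apply: integral_ge0 => u _; apply: PhiY_ge0 => //; rewrite le_max lexx orbT.
have := @measurable_fun_fubini_tonelli_F _ _ _ _ _ (@lebesgue_measure R) H mH H0.
move=> /(measurable_funS _ (@subsetT _ [set lam | lamb M <= lam]%R)) => /(_ measurableT) mF.
apply: eq_measurable_fun mF => lam; rewrite inE /= => hl.
rewrite /fubini_F [RHS]integral_mkcond; apply: eq_integral => s _; rewrite !patchE /H /= indicE /Dd.
case: ifPn => sD.
  rewrite mulr1 /GYc /=; congr (_ * _)%E; apply: eq_integral => y _.
  have -> : Num.max s 0%R = s by apply/max_idPl; move/set_mem: sD => /=; rewrite in_itv /= => /andP[/ltW].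
  by [].
by rewrite mulr0 mul0e.
Qed.

Lemma Top0_meas w n : (forall m, measurable_fun setT (w m)) -> (forall m x, 0 <= w m x) ->
  measurable_fun [set lam | lamb M <= lam]%R (fun lam => Top0 M delta w n lam).
Proof.
move=> hw w0; rewrite /Top0 /=.
apply: emeasurable_funD; first apply: emeasurable_funD.
- apply: emeasurable_funM.
    by apply/measurable_EFinP; apply: mTS; exact: (c0_meas M delta).
  apply: mTS; apply: measurableT_comp; first exact: hw.
  rewrite /lamc; mt.
- exact: F1_meas.
- exact: F2_meas.
Qed.

Lemma Top_meas w n : (forall m, measurable_fun setT (w m)) -> (forall m x, 0 <= w m x) ->
  measurable_fun [set lam | lamb M <= lam]%R (fun lam => Top M delta w n lam).
Proof.
move=> hw w0; case: n => [|n] /=.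
  by apply: measurable_maxe; [exact: Top0_meas | exact: measurable_cst].
apply: measurable_maxe; first exact: Top0_meas.
apply: measurable_maxe; last exact: measurable_cst.
apply: emeasurable_funD; last exact: measurable_cst.
exact: mTS (hw n).
Qed.

End Meas2.


Section MCT.
Context (R : realType) (M : model R) (delta : R).
Hypothesis hp : 0 < prem M.
Hypothesis hdel : 0 < delta.
Hypothesis hlamb : 0 <= lamb M.
Hypothesis hbeta : 0 <= beta M.
Local Open Scope ereal_scope.

Variables (wj : nat -> nat -> R -> \bar R) (w : nat -> R -> \bar R).
Hypothesis wj_meas : forall j m, measurable_fun setT (wj j m).
Hypothesis wj_ge0 : forall j m x, 0 <= wj j m x.
Hypothesis wj_nd : forall m x, {homo (fun j => wj j m x) : a b / (a <= b)%N >-> a <= b}.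
Hypothesis wj_cvg : forall m x, (fun j => wj j m x) @ \oo --> w m x.

Lemma w_ge0 m x : 0 <= w m x.
Proof.
have h := @wj_cvg m x; rewrite -(cvg_lim _ h) //; apply: lime_ge.
  by apply/cvg_ex; eexists; exact: h.
by apply: nearW => j; exact: wj_ge0.
Qed.

Lemma PhiU_cvg n lam s u : (fun j => PhiU M delta (wj j) n lam s u) @ \oo --> PhiU M delta w n lam s u.
Proof.
rewrite /PhiU /PhiUg /=; case: ifPn => y0; last exact: cvg_cst.
apply: cvgeD; [|exact: (@wj_cvg _ _)|exact: cvg_cst].
by apply: ge0_adde_def; rewrite inE /= ?w_ge0 // lee_fin subr_ge0 (xg_gidx hp hdel y0).
Qed.

Lemma PhiY_cvg n lam s y : (0 <= s)%R -> (fun j => PhiY M (wj j) n lam s y) @ \oo --> PhiY M w n lam s y.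
Proof.
move=> s0; rewrite /PhiY /PhiYg /=.
apply: cvgeD; [|exact: (@wj_cvg _ _)|exact: cvg_cst].
by apply: ge0_adde_def; rewrite inE ?w_ge0 // lee_fin mulr_ge0 // ltW.
Qed.

Lemma innerU_cvg n lam s : (fun j => \int[FU M]_u PhiU M delta (wj j) n lam s u) @ \oo -->
  \int[FU M]_u PhiU M delta w n lam s u.
Proof.
have := @cvg_monotone_convergence _ _ _ (FU M) setT measurableT
  (fun j u => PhiU M delta (wj j) n lam s u).
have -> : (fun u => limn ((fun j u => PhiU M delta (wj j) n lam s u)^~ u)) = PhiU M delta w n lam s.
  by apply: funext => u; apply: cvg_lim => //; exact: PhiU_cvg.
apply.
- move=> j; have := @PhiU_meas R M delta (wj j) n (wj_meas j).
  by move/(measurable_fun_pair2 (lam, s)).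
- by move=> j u _; exact: PhiU_ge0.
- move=> u _ a b ab; rewrite /PhiU /PhiUg /=; case: ifPn => // _.
  by apply: leeD => //; exact: wj_nd.
Qed.

Lemma innerY_cvg n lam s : (0 <= s)%R -> (fun j => \int[FY M]_y PhiY M (wj j) n lam s y) @ \oo -->
  \int[FY M]_y PhiY M w n lam s y.
Proof.
move=> s0.
have := @cvg_monotone_convergence _ _ _ (FY M) setT measurableT
  (fun j y => PhiY M (wj j) n lam s y).
have -> : (fun y => limn ((fun j y => PhiY M (wj j) n lam s y)^~ y)) = PhiY M w n lam s.
  by apply: funext => y; apply: cvg_lim => //; exact: PhiY_cvg.
apply.
- move=> j; have := @PhiY_meas R M (wj j) n (wj_meas j).
  by move/(measurable_fun_pair2 (lam, s)).
- by move=> j y _; exact: PhiY_ge0.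
- move=> y _ a b ab; rewrite /PhiY /PhiYg /=.
  by apply: leeD => //; exact: wj_nd.
Qed.

Lemma inD s : s \in `]0%R, delta] -> (0 <= s)%R.
Proof. by rewrite in_itv /= => /andP[/ltW]. Qed.

Lemma inD' s : Dd delta s -> (0 <= s)%R.
Proof. exact: inD. Qed.

Lemma Top0_mct n lam : (lamb M <= lam)%R ->
  (fun j => Top0 M delta (wj j) n lam) @ \oo --> Top0 M delta w n lam.
Proof.
move=> hl.
have -> : (fun j => Top0 M delta (wj j) n lam) = (fun j =>
  ((c0 M delta lam)%:E * wj j n.+1 (lamc M lam delta)
  + \int[lebesgue_measure]_(s in `]0%R, delta]) ((c1 M lam s)%:E * \int[FU M]_u PhiU M delta (wj j) n lam s u)
  + \int[lebesgue_measure]_(s in `]0%R, delta]) ((c2 M lam s)%:E * \int[FY M]_y PhiY M (wj j) n lam s y))%E).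
  by apply: funext => j; exact: Top0E.
rewrite Top0E.
have B : (fun j => \int[lebesgue_measure]_(s in `]0%R, delta]) ((c1 M lam s)%:E * \int[FU M]_u PhiU M delta (wj j) n lam s u))
   @ \oo --> \int[lebesgue_measure]_(s in `]0%R, delta]) ((c1 M lam s)%:E * \int[FU M]_u PhiU M delta w n lam s u).
  have := @cvg_monotone_convergence _ _ _ (@lebesgue_measure R) _ (mDd delta)
    (fun j s => (c1 M lam s)%:E * \int[FU M]_u PhiU M delta (wj j) n lam s u).
  have -> : (fun s => limn ((fun j s => (c1 M lam s)%:E * \int[FU M]_u PhiU M delta (wj j) n lam s u)^~ s))
     = (fun s => (c1 M lam s)%:E * \int[FU M]_u PhiU M delta w n lam s u).
    apply: funext => s; apply: cvg_lim => //; apply: cvgeZl => //; exact: innerU_cvg.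
  apply.
  - move=> j; apply: mTS; apply: emeasurable_funM.
      by apply/measurable_EFinP; exact: (measurable_fun_pair2 lam (c1_meas M)).
    have := @GU_meas R M delta hp hdel (wj j) n (wj_meas j) (wj_ge0 j).
    by move/(measurable_fun_pair2 lam).
  - move=> j s _; apply: mule_ge0; first by rewrite lee_fin c1_ge0.
    by apply: integral_ge0 => u _; exact: PhiU_ge0.
  - move=> s _ a b ab; apply: lee_wpmul2l; first by rewrite lee_fin c1_ge0.
    apply: le_integral_gen => u _; rewrite /PhiU /PhiUg /=; case: ifPn => // _.
    by apply: leeD => //; exact: wj_nd.
have C : (fun j => \int[lebesgue_measure]_(s in `]0%R, delta]) ((c2 M lam s)%:E * \int[FY M]_y PhiY M (wj j) n lam s y))
   @ \oo --> \int[lebesgue_measure]_(s in `]0%R, delta]) ((c2 M lam s)%:E * \int[FY M]_y PhiY M w n lam s y).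
  have := @cvg_monotone_convergence _ _ _ (@lebesgue_measure R) _ (mDd delta)
    (fun j s => (c2 M lam s)%:E * \int[FY M]_y PhiY M (wj j) n lam s y).
  have -> : \int[lebesgue_measure]_(s in Dd delta) limn ((fun j s => (c2 M lam s)%:E * \int[FY M]_y PhiY M (wj j) n lam s y)^~ s)
     = \int[lebesgue_measure]_(s in `]0%R, delta]) ((c2 M lam s)%:E * \int[FY M]_y PhiY M w n lam s y).
    apply: eq_integral => s /set_mem sD; apply: cvg_lim => //; apply: cvgeZl => //; apply: innerY_cvg.
    exact: inD'.
  apply.
  - move=> j; apply: (eq_measurable_fun (fun s => (c2 M lam s)%:E * GYc M (wj j) n (lam, s))).
      move=> s sD; rewrite /GYc /=; congr (_ * _); apply: eq_integral => y _.
      by have -> : Num.max s 0%R = s by apply/max_idPl; move/set_mem: sD; exact: inD'.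
    apply: mTS; apply: emeasurable_funM.
      by apply/measurable_EFinP; exact: (measurable_fun_pair2 lam (c2_meas M)).
    have := @GYc_meas R M hp (wj j) n (wj_meas j) (wj_ge0 j).
    by move/(measurable_fun_pair2 lam).
  - move=> j s sD; apply: mule_ge0; first by rewrite lee_fin c2_ge0.
    by apply: integral_ge0 => u _; apply: PhiY_ge0 => //; exact: inD'.
  - move=> s _ a b ab; apply: lee_wpmul2l; first by rewrite lee_fin c2_ge0.
    apply: le_integral_gen => u _; rewrite /PhiY /PhiYg /=.
    by apply: leeD => //; exact: wj_nd.
have ge0B : 0 <= \int[lebesgue_measure]_(s in `]0%R, delta]) ((c1 M lam s)%:E * \int[FU M]_u PhiU M delta w n lam s u).
  apply: integral_ge0 => s _; apply: mule_ge0; first by rewrite lee_fin c1_ge0.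
  by apply: integral_ge0 => u _; apply: PhiU_ge0 => // *; exact: w_ge0.
have ge0C : 0 <= \int[lebesgue_measure]_(s in `]0%R, delta]) ((c2 M lam s)%:E * \int[FY M]_y PhiY M w n lam s y).
  apply: integral_ge0 => s sD; apply: mule_ge0; first by rewrite lee_fin c2_ge0.
  by apply: integral_ge0 => u _; apply: PhiY_ge0 => // *; [exact: w_ge0 | exact: inD'].
have ge0A : 0 <= (c0 M delta lam)%:E * w n.+1 (lamc M lam delta).
  by apply: mule_ge0; [rewrite lee_fin c0_ge0 | exact: w_ge0].
apply: cvgeD; [|apply: cvgeD|exact: C].
- apply: ge0_adde_def; rewrite inE /=; [exact: adde_ge0 | exact: ge0C].
- apply: ge0_adde_def; rewrite inE /=; [exact: ge0A | exact: ge0B].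
- by apply: cvgeZl => //; exact: (@wj_cvg _ _).
- exact: B.
Qed.

End MCT.


Section Clamp.
Context (R : realType).
Local Open Scope ereal_scope.

Definition clamp (j : nat) (x : \bar R) : \bar R :=
  maxe 0 (mine (x - ((j.+1%:R)^-1)%:E) (j%:R)%:E).

Lemma clamp_ge0 j x : 0 <= clamp j x.
Proof. by rewrite /clamp le_max lexx. Qed.

Lemma clamp_le j x : 0 <= x -> clamp j x <= x.
Proof.
move=> x0; rewrite /clamp ge_max x0 /= ge_min; apply/orP; left.
by apply: geeDl; rewrite lee_fin oppr_le0 invr_ge0.
Qed.

Lemma clamp_lt j x : 0 < x -> clamp j x < x.
Proof.
move=> x0; rewrite /clamp gt_max x0 /=; case: x x0 => [r|_|//] /=.
  rewrite lte_fin => r0; rewrite gt_min; apply/orP; left.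
  by rewrite -EFinD lte_fin ltrBlDr ltrDl invr_gt0 ltr0n.
by rewrite gt_min ltry orbT.
Qed.

Lemma clamp_nd x : {homo (fun j => clamp j x) : a b / (a <= b)%N >-> a <= b}.
Proof.
move=> a b ab; rewrite /clamp; apply: le_max2 => //; apply: le_min2.
  apply: leeD => //; rewrite leeN2 lee_fin lef_pV2 ?posrE ?ltr0n // ler_nat.
  by rewrite ltnS.
by rewrite lee_fin ler_nat.
Qed.

Lemma clamp_meas d (T : measurableType d) (D : set T) (f : T -> \bar R) j :
  measurable_fun D f -> measurable_fun D (fun x => clamp j (f x)).
Proof.
move=> mf; apply: measurable_maxe; first exact: measurable_cst.
apply: measurable_mine; last exact: measurable_cst.
by apply: emeasurable_funD => //; exact: measurable_cst.
Qed.

Lemma clamp_sup x : 0 <= x -> ereal_sup (range (fun j => clamp j x)) = x.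
Proof.
move=> x0; apply/eqP; rewrite eq_le; apply/andP; split.
  by apply: ge_ereal_sup => _ [j _ <-]; exact: clamp_le.
rewrite leNgt; apply/negP => hlt.
suff [j hj] : exists j, ereal_sup (range (fun j => clamp j x)) < clamp j x.
  by move: hj; apply/negP; rewrite -leNgt; apply: ereal_sup_ubound; exists j.
move: hlt; set S := ereal_sup _; have S0 : 0 <= S.
  by apply: le_trans (clamp_ge0 0 x) _; apply: ereal_sup_ubound; exists 0%N.
case: S S0 => [t| |] //= t0 hlt; last by move: hlt; rewrite ltNge leey.
case: x x0 hlt => [r||//] /= r0 hlt.
  move: hlt; rewrite lte_fin => tr.
  exists ((Num.truncn r) + (Num.truncn ((r - t)^-1))).+1%N.
  rewrite /clamp lt_max; apply/orP; right; rewrite lt_min; apply/andP; split.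
    rewrite -EFinD lte_fin ltrBrDl -ltrBrDr.
    rewrite -[X in (_ < X)%R]invrK ltf_pV2 ?posrE ?invr_gt0 ?subr_gt0 ?ltr0n //.
    apply: lt_le_trans (truncnS_gt _) _; rewrite ler_nat !ltnS.
    by apply: leq_trans (leq_addl _ _) (leqnSn _).
  rewrite lte_fin; apply: lt_trans tr _; apply: lt_le_trans (truncnS_gt _) _.
  by rewrite ler_nat ltnS leq_addr.
exists (Num.truncn t).+1.
rewrite /clamp lt_max; apply/orP; right; rewrite lt_min; apply/andP; split.
  by rewrite addye ?ltry.
by rewrite lte_fin truncnS_gt.
Qed.

Lemma clamp_cvg x : 0 <= x -> (fun j => clamp j x) @ \oo --> x.
Proof.
move=> x0; rewrite -{2}(clamp_sup x0); apply: ereal_nondecreasing_cvgn.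
exact: clamp_nd.
Qed.

End Clamp.


Section Bellman.
Context (R : realType) (M : model R) (delta : R).
Hypothesis hp : 0 < prem M.
Hypothesis hdel : 0 < delta.
Hypothesis hlamb : 0 <= lamb M.
Hypothesis hbeta : 0 <= beta M.
Hypothesis hFY : FY M [set x : R | x <= 0] = 0%E.
Local Open Scope ereal_scope.

Definition term0 : nat -> R -> \bar R := fun _ _ => 0.
Definition Vk k n lam := ereal_sup [set Jval M delta term0 k pi [:: (n, lam, 0%R)] | pi in admissible M].

Lemma EF_adm : admissible M (fun _ => EF). Proof. by []. Qed.

Lemma xg_ge0 n : (0 <= xg M delta n)%R.
Proof. by rewrite /xg !mulr_ge0 // ltW. Qed.

Lemma Jval_EF_ge0 k n lam : 0 <= Jval M delta term0 k (fun _ => EF) [:: (n, lam, 0%R)].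
Proof. by case: k => [|k] //=; rewrite lee_fin xg_ge0. Qed.

Lemma J_le_Vk k pi n lam : admissible M pi -> Jval M delta term0 k pi [:: (n, lam, 0%R)] <= Vk k n lam.
Proof. by move=> adm; apply: ereal_sup_ubound; exists pi. Qed.

Lemma Vk_ge0 k n lam : 0 <= Vk k n lam.
Proof. by apply: le_trans (Jval_EF_ge0 k n lam) _; exact: J_le_Vk. Qed.

Lemma Top0_le_Top w n lam : Top0 M delta w n lam <= Top M delta w n lam.
Proof. by case: n => [|n] /=; rewrite le_max lexx. Qed.

Lemma TopF_le_Top w n lam : (xg M delta n)%:E <= Top M delta w n lam.
Proof. by case: n => [|n] /=; rewrite !le_max lexx ?orbT. Qed.

Lemma Top1_le_Top w n lam : w n lam + (delta * prem M)%:E <= Top M delta w n.+1 lam.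
Proof. by rewrite /= !le_max lexx ?orbT. Qed.

Lemma Top_le w1 w2 n lam : (lamb M <= lam)%R ->
  (forall m x, (lamb M <= x)%R -> w1 m x <= w2 m x) ->
  Top M delta w1 n lam <= Top M delta w2 n lam.
Proof.
move=> hl hw.
have h0 : Top0 M delta w1 n lam <= Top0 M delta w2 n lam.
  by apply: T0gen_le => // n' lam' s hl'; exact: hw.
case: n h0 => [|n] h0 /=; first exact: le_max2.
apply: le_max2 => //; apply: le_max2 => //; apply: leeD => //; exact: hw.
Qed.

Lemma Top_eq w1 w2 n lam : (lamb M <= lam)%R ->
  (forall m x, (lamb M <= x)%R -> w1 m x = w2 m x) ->
  Top M delta w1 n lam = Top M delta w2 n lam.
Proof.
move=> hl hw; apply/eqP; rewrite eq_le; apply/andP; split; apply: Top_le => // m x hx;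
  by rewrite hw.
Qed.

Lemma Bellman_le k n lam : (lamb M <= lam)%R -> Vk k.+1 n lam <= Top M delta (Vk k) n lam.
Proof.
move=> hl; apply: ge_ereal_sup => _ [pi adm <-]; rewrite JvalS /=.
case Hpi: (pi [:: (n, lam, 0%R)]).
- apply: le_trans (Top0_le_Top _ _ _); apply: T0gen_le => // n' lam' s _.
  rewrite Jval_restart; apply: J_le_Vk; exact: restart_adm.
- case: n Hpi => [|n] Hpi; first by move: (adm [:: (0%N, lam, 0%R)] erefl); rewrite Hpi.
  apply: le_trans (Top1_le_Top _ _ _); apply: leeD => //=.
  rewrite Jval_restart; apply: J_le_Vk; exact: restart_adm.
- exact: TopF_le_Top.
Qed.

Definition tl (w : nat -> R -> \bar R) m := (w m) \_ [set x | (lamb M <= x)%R].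

Lemma tlE w m x : (lamb M <= x)%R -> tl w m x = w m x.
Proof. by move=> hx; rewrite /tl patchE mem_set. Qed.

Lemma tl_ge0 w : (forall m x, 0 <= w m x) -> forall m x, 0 <= tl w m x.
Proof. by move=> w0 m x; rewrite /tl patchE; case: ifP. Qed.

Lemma tl_meas w m : measurable_fun [set x | (lamb M <= x)%R] (w m) -> measurable_fun setT (tl w m).
Proof.
move=> h; have mD : measurable [set x : R | (lamb M <= x)%R].
  have -> : [set x : R | (lamb M <= x)%R] = [set` `[lamb M, +oo[] .
    by apply/seteqP; split => x /=; rewrite in_itv /= andbT.
  exact: measurable_itv.
exact: (measurable_restrictT _ mD).1 h.
Qed.

Lemma Top0_eq w1 w2 n lam : (lamb M <= lam)%R ->
  (forall m x, (lamb M <= x)%R -> w1 m x = w2 m x) ->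
  Top0 M delta w1 n lam = Top0 M delta w2 n lam.
Proof.
move=> hl hw; apply/eqP; rewrite eq_le; apply/andP; split; apply: T0gen_le => // m x s hx;
  by rewrite hw.
Qed.

Lemma Top1_le_Vk k n lam : Vk k n lam + (delta * prem M)%:E <= Vk k.+1 n.+1 lam.
Proof.
rewrite -leeBrDr //; apply: ge_ereal_sup => _ [pi adm <-]; rewrite leeBrDr //.
pose g := glue M (fun h => if ((cur M h).1.1 == 0)%N then E0 else E1) (fun _ => pi).
have gadm : admissible M g.
  by apply: glue_adm => // h -> _.
apply: le_trans (J_le_Vk _ _ _ gadm); rewrite JvalS /=.
by rewrite /g Jval_glue.
Qed.

Lemma TopF_le_Vk k n lam : (xg M delta n)%:E <= Vk k.+1 n lam.
Proof. exact: (J_le_Vk k.+1 n lam (EF_adm)). Qed.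

Lemma Bellman_ge k n lam : (lamb M <= lam)%R ->
  (forall m, measurable_fun [set x | (lamb M <= x)%R] (Vk k m)) ->
  Top M delta (Vk k) n lam <= Vk k.+1 n lam.
Proof.
move=> hl hmeas.
pose wt := tl (Vk k).
have wt0 : forall m x, 0 <= wt m x by apply: tl_ge0 => *; exact: Vk_ge0.
pose gj j m x := clamp j (wt m x).
have hex : forall (j : nat) (a : obs R), exists P : policy R, (admissible M P) /\ 
    (gj j a.1.1 a.1.2 <= Jval M delta term0 k P [:: (a.1, 0%R)]).
  move=> j [[n' lam'] s] /=.
  have [wpos|] := ltP 0 (wt n' lam').
    have hlam' : (lamb M <= lam')%R.
      by move: wpos; rewrite /wt /tl patchE; case: ifPn => [/set_mem //|]; rewrite ltxx.
    have := clamp_lt j wpos; rewrite /wt tlE // => /ereal_sup_gt [_ [pi adm <-] hlt].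
    by exists pi; split => //; rewrite /gj /wt tlE //; exact: ltW.
  move=> wle; exists (fun _ => EF); split => //.
  apply: le_trans (Jval_EF_ge0 k n' lam'); rewrite /gj.
  have -> : wt n' lam' = 0 by apply/eqP; rewrite eq_le wle wt0.
  by apply: clamp_le.
have hP : forall j : nat, {P : obs R -> policy R & forall a, (admissible M (P a)) /\ 
    (gj j a.1.1 a.1.2 <= Jval M delta term0 k (P a) [:: (a.1, 0%R)])}.
  by move=> j; exact: (choice (hex j)).
have hT : forall j, Top0 M delta (gj j) n lam <= Vk k.+1 n lam.
  move=> j; have [P HP] := hP j.
  pose g := glue M (fun _ => E0) P.
  have gadm : admissible M g by apply: glue_adm => // a; have [] := HP a.
  apply: le_trans (J_le_Vk _ _ _ gadm); rewrite JvalS /=.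
  apply: T0gen_le => // n' lam' s _; rewrite /g Jval_glue.
  by have [] := HP (n', lam', (0 + s)%R).
have hmct : (fun j => Top0 M delta (gj j) n lam) @ \oo --> Top0 M delta wt n lam.
  apply: (Top0_mct hp hdel hlamb hbeta) => //.
  - by move=> j m; apply: clamp_meas; apply: tl_meas; exact: hmeas.
  - by move=> j m x; exact: clamp_ge0.
  - by move=> m x; exact: clamp_nd.
  - by move=> m x; exact: clamp_cvg.
have h0 : Top0 M delta (Vk k) n lam <= Vk k.+1 n lam.
  rewrite -(@Top0_eq wt) //; last by move=> m x hx; rewrite /wt tlE.
  rewrite -(cvg_lim _ hmct) //; apply: lime_le; first by apply/cvg_ex; eexists; exact: hmct.
  by apply: nearW => j; exact: hT.
clear hT hmct hex hP; case: n h0 => [|n] h0 /=; rewrite !ge_max h0 ?TopF_le_Vk //=.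
by rewrite Top1_le_Vk.
Qed.

End Bellman.


Section Final.
Context (R : realType) (M : model R) (delta : R).
Hypothesis hp : 0 < prem M.
Hypothesis hdel : 0 < delta.
Hypothesis hlamb : 0 <= lamb M.
Hypothesis hbeta : 0 <= beta M.
Hypothesis hFY : FY M [set x : R | x <= 0] = 0%E.
Local Open Scope ereal_scope.

Local Notation Vk := (Vk M delta).

Lemma Vk0 n lam : Vk 0 n lam = 0.
Proof.
apply/eqP; rewrite eq_le Vk_ge0 // andbT; apply: ge_ereal_sup => _ [pi _ <-] //.
Qed.

Lemma Bellman_eq k n lam : (lamb M <= lam)%R ->
  (forall m, measurable_fun [set x | (lamb M <= x)%R] (Vk k m)) ->
  Vk k.+1 n lam = Top M delta (Vk k) n lam.
Proof.
move=> hl hm; apply/eqP; rewrite eq_le Bellman_le //=.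
exact: Bellman_ge.
Qed.

Lemma Vk_meas k m : measurable_fun [set x | (lamb M <= x)%R] (Vk k m).
Proof.
elim: k m => [|k IH] m.
  have -> : Vk 0 m = cst 0 by apply: funext => x; exact: Vk0.
  apply: measurable_cst.
apply: (eq_measurable_fun (fun x => Top M delta (tl M (Vk k)) m x)).
  move=> x; rewrite inE /= => hx; rewrite (@Bellman_eq k m x hx IH).
  by apply: Top_eq => // n' y hy; rewrite tlE.
apply: Top_meas => //.
  by move=> n'; apply: tl_meas; exact: IH.
by apply: tl_ge0 => *; exact: Vk_ge0.
Qed.

Lemma Bellman_eq' k n lam : (lamb M <= lam)%R ->
  Vk k.+1 n lam = Top M delta (Vk k) n lam.
Proof. by move=> hl; apply: Bellman_eq => // m; exact: Vk_meas. Qed.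

Lemma Vk_ndS k n lam : (lamb M <= lam)%R -> Vk k n lam <= Vk k.+1 n lam.
Proof.
elim: k n lam => [|k IH] n lam hl.
  by rewrite Vk0 Vk_ge0.
rewrite (Bellman_eq' k n hl) (Bellman_eq' k.+1 n hl).
apply: Top_le => // m x hx; exact: IH.
Qed.

Lemma Vk_nd n lam : (lamb M <= lam)%R -> {homo (fun k => Vk k n lam) : a b / (a <= b)%N >-> a <= b}.
Proof.
by move=> hl; apply/nondecreasing_seqP => k; exact: Vk_ndS.
Qed.

Lemma Vd_eq n lam : Vd M delta n lam = ereal_sup (range (fun k => Vk k n lam)).
Proof.
apply/eqP; rewrite eq_le; apply/andP; split.
  apply: ge_ereal_sup => _ [k [pi [adm ->]]].
  apply: le_trans (J_le_Vk delta k _ _ adm) _; apply: ereal_sup_ubound; by exists k.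
apply: ge_ereal_sup => _ [k _ <-]; apply: ge_ereal_sup => _ [pi adm <-].
by apply: ereal_sup_ubound; exists k, pi.
Qed.

Lemma Vk_le_Vd k n lam : Vk k n lam <= Vd M delta n lam.
Proof. by rewrite Vd_eq; apply: ereal_sup_ubound; exists k. Qed.

Lemma Vk_cvg n lam : (lamb M <= lam)%R -> (fun k => Vk k n lam) @ \oo --> Vd M delta n lam.
Proof. by move=> hl; rewrite Vd_eq; apply: ereal_nondecreasing_cvgn; exact: Vk_nd. Qed.

Lemma Vd_ge0 n lam : 0 <= Vd M delta n lam.
Proof. by apply: le_trans (Vk_le_Vd 0 n lam); rewrite Vk0. Qed.

Lemma Top_Vd n lam : (lamb M <= lam)%R -> Top M delta (Vd M delta) n lam = Vd M delta n lam.
Proof.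
move=> hl; apply/eqP; rewrite eq_le; apply/andP; split; last first.
  rewrite [X in X <= _]Vd_eq; apply: ge_ereal_sup => _ [[|k] _ <-].
    by rewrite Vk0; apply: le_trans (TopF_le_Top M delta _ _ _); rewrite lee_fin xg_ge0.
  rewrite (Bellman_eq' k n hl); apply: Top_le => // m x _; exact: Vk_le_Vd.
have h0 : Top0 M delta (Vd M delta) n lam <= Vd M delta n lam.
  have hmct : (fun k => Top0 M delta (tl M (Vk k)) n lam) @ \oo --> Top0 M delta (tl M (Vd M delta)) n lam.
    apply: (Top0_mct hp hdel hlamb hbeta) => //.
    - by move=> k m; apply: tl_meas; exact: Vk_meas.
    - by move=> k; apply: tl_ge0 => *; exact: Vk_ge0.
    - move=> m x; rewrite /tl; case: (boolP (x \in [set x | (lamb M <= x)%R])) => hx.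
        by move=> a b ab; rewrite !patchE hx; apply: Vk_nd => //; move/set_mem: hx.
      by move=> a b ab; rewrite !patchE (negbTE hx).
    - move=> m x; rewrite /tl; case: (boolP (x \in [set x | (lamb M <= x)%R])) => hx.
        rewrite patchE hx.
        have -> : (fun j => ((Vk j m) \_ [set x | (lamb M <= x)%R]) x) = (fun j => Vk j m x).
          by apply: funext => j; rewrite patchE hx.
        by apply: Vk_cvg; move/set_mem: hx.
      rewrite patchE (negbTE hx).
      have -> : (fun j => ((Vk j m) \_ [set x | (lamb M <= x)%R]) x) = (fun j => 0).
        by apply: funext => j; rewrite patchE (negbTE hx).
      exact: cvg_cst.
  rewrite -(@Top0_eq _ M delta hlamb hbeta hFY (tl M (Vd M delta))) //; last by move=> m x hx; rewrite tlE.
  rewrite -(cvg_lim _ hmct) //; apply: lime_le; first by apply/cvg_ex; eexists; exact: hmct.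
  apply: nearW => k; rewrite (@Top0_eq _ M delta hlamb hbeta hFY _ (Vk k)) //; last by move=> m x hx; rewrite tlE.
  apply: le_trans (Top0_le_Top M delta _ _ _) _; rewrite -(Bellman_eq' k n hl); exact: Vk_le_Vd.
have hF : (xg M delta n)%:E <= Vd M delta n lam.
  by apply: le_trans (Vk_le_Vd 1 n lam); exact: (TopF_le_Vk M delta 0 n lam).
case: n h0 hF => [|n] h0 hF /=; rewrite !ge_max h0 hF ?andbT //=.
have hc : (fun k => Vk k n lam + (delta * prem M)%:E) @ \oo --> Vd M delta n lam + (delta * prem M)%:E.
  apply: cvgeD; [exact: fin_num_adde_defl | exact: Vk_cvg | exact: cvg_cst].
rewrite /Top1 /= -(cvg_lim _ hc) //; apply: lime_le; first by apply/cvg_ex; eexists; exact: hc.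
apply: nearW => k; apply: le_trans (Top1_le_Vk M delta k n lam) _; exact: Vk_le_Vd.
Qed.

End Final.


Section Part1.
Context (R : realType) (M : model R) (delta : R).
Hypothesis hp : 0 < prem M.
Hypothesis hdel : 0 < delta.
Hypothesis hlamb : 0 <= lamb M.
Hypothesis hbeta : 0 <= beta M.
Hypothesis hFY : FY M [set x : R | x <= 0] = 0%E.
Local Open Scope ereal_scope.

Definition termxg : nat -> R -> \bar R := fun n' _ => (xg M delta n')%:E.

Lemma Jmono k pi : forall H, (lamb M <= (cur M H).1.2)%R ->
  Jval M delta (@term0 R) k pi H <= Jval M delta termxg k pi H.
Proof.
elim: k => [|k IH] H.
  by rewrite /=; case: (cur M H) => [[n lam] t] _; rewrite /term0 /termxg lee_fin xg_ge0.
rewrite !JvalS; case E: (cur M H) => [[n lam] t] /= hl.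
case: (pi H) => //.
- apply: T0gen_le => // n' lam' s hl'; exact: IH.
- by apply: leeD => //; apply: IH.
Qed.

Lemma Vl_lower l n lam : (lamb M <= lam)%R -> Vk M delta l n lam <= Vl M delta l n lam.
Proof.
move=> hl; apply: ge_ereal_sup => _ [pi adm <-].
apply: le_trans (Jmono _ _ _) _ => //.
by apply: ereal_sup_ubound; exists pi.
Qed.

Lemma Vl_upper l n lam : Vl M delta l n lam <= Vk M delta l.+1 n lam.
Proof.
apply: ge_ereal_sup => _ [pi adm <-].
rewrite -(@Jval_trunc _ M delta l pi l [:: (n, lam, 0%R)]) ?add1n //.
by apply: J_le_Vk; exact: trunc_adm.
Qed.

Lemma Vl_cvg n lam : (lamb M <= lam)%R ->
  (fun l => Vl M delta l n lam) @ \oo --> Vd M delta n lam.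
Proof.
move=> hl.
apply: (@squeeze_cvge _ _ _ _ (fun l => Vk M delta l n lam) _ (fun l => Vk M delta l.+1 n lam)).
- by apply: nearW => l; rewrite Vl_lower //= Vl_upper.
- exact: (Vk_cvg hp hdel hlamb hbeta hFY).
- have := Vk_cvg hp hdel hlamb hbeta hFY (n:=n) hl.
  by rewrite -cvg_shiftS.
Qed.

End Part1.

Theorem proposition6p4 (R : realType) (M : model R) (eta delta : R) :
  0 < prem M -> 0 < disc M -> 0 < decay M -> 0 < beta M -> 0 <= lamb M ->
  FU M [set x : R | x <= 0] = 0%E -> FY M [set x : R | x <= 0] = 0%E ->
  (\int[FU M]_u u%:E < +oo)%E -> (\int[FY M]_y y%:E < +oo)%E ->
  0 < eta ->
  (prem M)%:E = ((1 + eta)%:E * \int[FU M]_u u%:E * lambda_av M)%E ->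
  0 < delta ->
  (forall (n : nat) (lam : R), lamb M <= lam ->
     (fun l : nat => Vl M delta l n lam) @ \oo --> Vd M delta n lam) /\
  (forall (n : nat) (lam : R), lamb M <= lam ->
     Top M delta (Vd M delta) n lam = Vd M delta n lam).
Proof.
move=> hp _ _ hb hlamb _ hFY _ _ _ _ hdel; split => n lam hl.
  exact: (Vl_cvg hp hdel hlamb (ltW hb) hFY).
exact: (Top_Vd hp hdel hlamb (ltW hb) hFY).
Qed.
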